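(* Let $k > 1$ be an integer and let $p > 2k+1$ be a prime such that $p$ divides $\mathrm{num}\!\left(\frac{2^{2k}(2^{2k-1}-1)}{(2k)!}B_k\right)$. Then $p$ divides $t_k = a_k\, 2^{2k-2}(2^{2k-1}-1)\,\mathrm{num}\!\left(\frac{B_k}{4k}\right)$, where $a_k = 1$ if $k$ is even and $a_k = 2$ if $k$ is odd.
   Context: $B_k$ denotes the $k$-th Bernoulli number in the convention of Hirzebruch and Milnor–Kervaire ($B_1 = 1/6$, $B_2 = 1/30$, $B_3 = 1/42, \dots$; i.e. $B_k = |b_{2k}|$ where $t/(e^t-1)=\sum b_m t^m/m!$). For a rational number $a/b$, $\mathrm{num}(a/b)$ denotes the numerator of $a/b$ written in lowest terms. (The integer $t_k$ is the order of the group of homotopy $(4k-1)$-spheres bounding parallelizable manifolds.) *)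

(* Defs.v *)
From mathcomp Require Import all_boot all_order all_algebra.
Set Implicit Arguments. Unset Strict Implicit. Unset Printing Implicit Defensive.
Import Order.TTheory GRing.Theory Num.Theory.
Local Open Scope ring_scope.

(* Bernoulli numbers b_m with t/(e^t-1) = sum b_m t^m/m!, i.e.
   b_0 = 1 and sum_{j=0}^{m} C(m+1,j) b_j = 0 for m >= 1.
   bern_list n = [:: b_0; ...; b_n]. *)
Fixpoint bern_list (n : nat) : seq rat :=
  match n with
  | 0 => [:: 1]
  | n'.+1 =>
      let s := bern_list n' in
      rcons s (- ((n'.+2)%:R)^-1 *
               \sum_(j < n'.+1) ('C(n'.+2, j))%:R * nth 0 s j)
  end.

Definition bernoulli_b (m : nat) : rat := nth 0 (bern_list m) m.

(* Hirzebruch / Milnor-Kervaire convention: B_k = |b_{2k}| (B_1 = 1/6, ...). *)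
Definition BernB (k : nat) : rat := `| bernoulli_b k.*2 |.

Definition a_k (k : nat) : int := if odd k then 2 else 1.

Definition t_k (k : nat) : int :=
  a_k k * (2 ^+ (k.*2 - 2)) * (2 ^+ (k.*2 - 1) - 1) *
  numq (BernB k / (4 * k)%:R).

(* Main.v *)
Require Import Defs.
From mathcomp Require Import all_boot all_order all_algebra.
From mathcomp Require Import ring lra zify.
Import Order.TTheory GRing.Theory Num.Theory.
Local Open Scope ring_scope.

Lemma key_id [nX dX nY dY U V : int] [X Y : rat] :
  X = nX%:~R / dX%:~R -> Y = nY%:~R / dY%:~R -> dX != 0 -> dY != 0 ->
  Y * V%:~R = X * U%:~R -> nY * dX * V = nX * dY * U.
Proof.
move=> -> -> hX hY h.
have hX' : (dX%:~R : rat) != 0 by rewrite intr_eq0.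
have hY' : (dY%:~R : rat) != 0 by rewrite intr_eq0.
apply: (@intr_inj rat); rewrite !rmorphM /=.
have e : (nY%:~R * dX%:~R * V%:~R : rat) = (nY%:~R / dY%:~R * V%:~R) * (dX%:~R * dY%:~R) by field.
rewrite e h; field; by rewrite hX'.
Qed.

Theorem proposition3p13 (k p : nat) :
  (1 < k)%N -> prime p -> (k.*2.+1 < p)%N ->
  (p%:Z %| numq ((2 ^+ k.*2 * (2 ^+ (k.*2 - 1) - 1)) / (k.*2)`!%:R * BernB k))%Z ->
  (p%:Z %| t_k k)%Z.
Proof.
move=> hk pp hpk.
set X := (_ * BernB k).
move=> hX.
set M : int := 2 ^+ (k.*2 - 1) - 1.
have [hM|hM] := boolP (p%:Z %| M)%Z.
  rewrite /t_k; apply: dvdz_mulr; exact: dvdz_mull.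
rewrite /t_k; apply: dvdz_mull.
set Y := BernB k / (4 * k)%:R.
set V : int := (4 * k)%:Z * 2 ^+ k.*2 * M.
set U : int := (k.*2)`!%:Z.
have hid : Y * V%:~R = X * U%:~R.
  rewrite /X /Y /V /U /M !rmorphM /= !rmorphB /= !rmorphXn /= !rmorph1 /=.
  have h1 : ((4 * k)%:R : rat) != 0 by rewrite pnatr_eq0; lia.
  have h2 : ((k.*2)`!%:R : rat) != 0 by rewrite pnatr_eq0 -lt0n fact_gt0.
  change (((4*k)%:Z)%:~R : rat) with ((4*k)%:R : rat).
  change (((k.*2)`!%:Z)%:~R : rat) with (((k.*2)`!)%:R : rat).
  field; rewrite h2 /= pnatr_eq0; apply/eqP; lia.
have := key_id (esym (divq_num_den X)) (esym (divq_num_den Y)) (denq_neq0 X) (denq_neq0 Y) hid.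
move=> e.
have : (p%:Z %| numq Y * denq X * V)%Z by rewrite e; apply: dvdz_mulr; apply: dvdz_mulr.
move=> H; have {H} : (p %| `|(numq Y * denq X * V)%R|)%N := H.
rewrite /V !abszM !(Euclid_dvdM _ _ pp).
have nd : ~~ (p %| `|denq X|)%N.
  apply/negP => hd.
  have := coprime_num_den X; rewrite /coprime => /eqP hg.
  have : (p %| gcdn `|numq X| `|denq X|)%N by rewrite dvdn_gcd hd andbT.
  rewrite hg dvdn1 => /eqP p1; rewrite p1 in pp.
  by [].
have n4 : ~~ (p %| 4)%N.
  apply/negP => /dvdn_leq h; have := h isT; move: hk hpk; rewrite -addnn; clear; lia.
have nk : ~~ (p %| k)%N.
  apply/negP => /dvdn_leq h.
  have k0 : (0 < k)%N by apply: leq_trans hk.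
  have := h k0; move: hk hpk; rewrite -addnn; clear; lia.
have n2 : ~~ (p %| `|(2 ^+ k.*2 : int)|)%N.
  rewrite abszX (Euclid_dvdX _ _ pp); apply/negP => /andP [/dvdn_leq h _].
  have := h isT; move: hk hpk; rewrite -addnn; clear; lia.
have hM' : ~~ (p %| `|M|)%N := hM.
rewrite (negbTE nd) (negbTE n4) (negbTE nk) (negbTE n2) (negbTE hM') !orbF.
exact: id.
Qed.
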